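(* Let $p,q,r\in\mathrm{sylv}_\infty$ with $\mathrm{ev}(p)=\mathrm{ev}(q)\leqslant\mathrm{ev}(r)$. Then $pr=qr$ in $\mathrm{sylv}_\infty$.
   Context: Let $\mathcal{A}=\{1<2<3<\cdots\}$. A right strict binary search tree is a labelled rooted binary tree (labels in $\mathcal{A}$) in which each node's label is $\ge$ every label in its left subtree and $<$ every label in its right subtree. Inserting $a$ into such a tree $T$: if $T$ is empty, create a node labelled $a$; otherwise, with root label $x$, recursively insert $a$ into the right subtree if $a>x$ and into the left subtree otherwise. For $w=w_1\cdots w_k\in\mathcal{A}^*$, $\mathrm{P}(w)$ is obtained from the empty tree by inserting $w_k,\dots,w_1$ in this order. The sylvester monoid $\mathrm{sylv}_\infty$ is $\mathcal{A}^*/{\equiv}$ where $u\equiv v\iff \mathrm{P}(u)=\mathrm{P}(v)$ (a congruence). The evaluation $\mathrm{ev}(u)$ of a word $u$ is the tuple $(|u|_a)_{a\in\mathcal{A}}$, $|u|_a$ being the number of occurrences of $a$ in $u$; equivalent words have the same evaluation, so $\mathrm{ev}$ is defined on $\mathrm{sylv}_\infty$. $\mathrm{ev}(u)\leqslant\mathrm{ev}(v)$ means $|u|_a\le|v|_a$ for every $a$. *)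

(* Defs.v *)
From mathcomp Require Import all_boot.
Set Implicit Arguments. Unset Strict Implicit. Unset Printing Implicit Defensive.

(* Alphabet A = {1 < 2 < 3 < ...}: letters are nats, a word is in A^* iff
   all its letters are positive. *)
Definition word_A (w : seq nat) : bool := all (fun a => 0 < a) w.

Inductive tree : Type := Leaf | Node of tree & nat & tree.

Fixpoint insert (a : nat) (t : tree) : tree :=
  match t with
  | Leaf => Node Leaf a Leaf
  | Node l x r => if x < a then Node l x (insert a r) else Node (insert a l) x r
  end.

Definition P (w : seq nat) : tree := foldr insert Leaf w.

Definition sylv_eq (u v : seq nat) : Prop := P u = P v.

Definition ev (u : seq nat) : nat -> nat := fun a => count_mem a u.

Definition ev_eq (u v : seq nat) : Prop := forall a, ev u a = ev v a.
Definition ev_le (u v : seq nat) : Prop := forall a, ev u a <= ev v a.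

(* Main.v *)
Require Import Defs.
From mathcomp Require Import all_boot.
From mathcomp Require Import zify.
From Stdlib Require Import Lia.

Fixpoint tmem (c : nat) (t : tree) : bool :=
  match t with
  | Leaf => false
  | Node l x r => (c == x) || (if x < c then tmem c r else tmem c l)
  end.

Lemma tmem_ins c a t : tmem c t -> tmem c (insert a t).
Proof.
elim: t => [//|l IHl x r IHr] /=.
case: (x < a) => /=; case/orP => [/eqP ->|H]; rewrite ?eqxx //; case: (x < c) H => H; first [by rewrite H orbT | by rewrite (IHl H) orbT | by rewrite (IHr H) orbT].
Qed.

Lemma tmem_self a t : tmem a (insert a t).
Proof.
elim: t => [|l IHl x r IHr] /=; first by rewrite eqxx.
by case: ifP => H /=; rewrite H ?IHl ?IHr orbT.
Qed.

Lemma ins_comm_sep a b c t : a <= c < b -> tmem c t ->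
  insert a (insert b t) = insert b (insert a t).
Proof.
move=> /andP[hac hcb]; elim: t => [//|l IHl x r IHr] /=.
case ha: (x < a); case hb: (x < b); rewrite /= ?ha ?hb /= ?ha ?hb //.
- have hcx : x < c by apply: leq_trans ha hac.
  by rewrite hcx gtn_eqF //= => /IHr ->.
- move/negbT: hb; rewrite -leqNgt => hxb.
  have hcx : c < x by apply: leq_trans hcb hxb.
  by rewrite ltn_eqF //= ltnNge (ltnW hcx) /= => /IHl ->.
Qed.

Lemma ins_comm a b t : tmem a t -> tmem b t ->
  insert a (insert b t) = insert b (insert a t).
Proof.
move=> ha hb; case: (ltngtP a b) => h.
- by apply: (@ins_comm_sep a b a); rewrite ?leqnn ?h.
- by symmetry; apply: (@ins_comm_sep b a b); rewrite ?leqnn ?h.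
- by rewrite h.
Qed.

Lemma foldr_tmem c s t : tmem c t -> tmem c (foldr insert t s).
Proof. by elim: s => //= b s IH /IH; apply: tmem_ins. Qed.

Lemma foldr_mem c s t : c \in s -> tmem c (foldr insert t s).
Proof.
elim: s => //= b s IH; rewrite inE => /orP[/eqP ->|/IH]; first exact: tmem_self.
exact: tmem_ins.
Qed.

Lemma foldr_ins_move a s u : tmem a u -> (forall b, b \in s -> tmem b u) ->
  foldr insert (insert a u) s = insert a (foldr insert u s).
Proof.
elim: s => //= b s IH ha hs.
rewrite IH //; last by move=> c hc; apply: hs; rewrite inE hc orbT.
apply: ins_comm; apply: foldr_tmem => //; apply: hs; by rewrite inE eqxx.
Qed.

Lemma foldr_perm p q t : perm_eq p q -> (forall b, b \in p -> tmem b t) ->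
  foldr insert t p = foldr insert t q.
Proof.
elim: p q => [|a p IH] q hpq hm.
  by move: hpq; rewrite perm_sym => /perm_nilP ->.
have haq : a \in q by rewrite -(perm_mem hpq) inE eqxx.
case/splitPr: haq hpq => q1 q2 hpq.
have hpq' : perm_eq p (q1 ++ q2).
  by rewrite -(perm_cons a); apply: (perm_trans hpq); rewrite perm_catC /= perm_cons perm_catC.
have hq : forall b, b \in q1 ++ q2 -> tmem b t.
  by move=> b hb; apply: hm; rewrite inE (perm_mem hpq') hb orbT.
rewrite /= (IH _ hpq'); last by move=> b hb; apply: hm; rewrite inE hb orbT.
rewrite foldr_cat /= foldr_cat foldr_ins_move //.
- apply: foldr_tmem; apply: hm; by rewrite inE eqxx.
- move=> b hb; apply: foldr_tmem; apply: hq; by rewrite mem_cat hb.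
Qed.

Theorem lemma4p4 (p q r : seq nat) :
  word_A p -> word_A q -> word_A r ->
  ev_eq p q -> ev_le q r ->
  sylv_eq (p ++ r) (q ++ r).
Proof.
move=> _ _ _ heq hle; rewrite /sylv_eq /P !foldr_cat.
apply: foldr_perm.
  by apply/allP => x _; rewrite /= -/(ev p x) -/(ev q x) heq.
move=> b hb; apply: foldr_mem.
have : 0 < count_mem b p by rewrite -has_count has_pred1.
rewrite -/(ev p b) heq => h; have := leq_trans h (hle b).
by rewrite /ev -has_count has_pred1.
Qed.
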